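(* For real $c$, $x\ge 0$ and $y\ge 1$, let $\Phi_y(x)=(y+1)\,y^c+x^c-(y+1)\,x$. Then: (a) if $1<c<\frac{1+\sqrt5}{2}$, there exist $x\ge 2$ and $y$ with $1\le y\le x$ such that $\Phi_y(x)<0$; (b) if $c=\frac{1+\sqrt5}{2}$, then $\Phi_y(x)\ge 0$ for all $x\ge 0$ and all $y\ge 1$. *)

(* Defs.v *)
From Stdlib Require Import Reals.
Open Scope R_scope.

(* Real power x^c for x >= 0, with the convention 0^c = 0 (appropriate
   for c > 0, the only case used). Stdlib's Rpower is exp (c * ln x),
   which would give 0^c = 1, so we special-case 0. *)
Definition rpow (x c : R) : R := if Req_EM_T x 0 then 0 else Rpower x c.

Definition Phi (c y x : R) : R := (y + 1) * rpow y c + rpow x c - (y + 1) * x.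

(* Main.v *)
Require Import Defs.
From Stdlib Require Import Reals Lra Psatz.
Open Scope R_scope.

Lemma lnle (a b : R) : 0 < a -> a <= b -> ln a <= ln b.
Proof. intros Ha Hab. destruct (Req_dec a b) as [->|Hn]; [lra|].
  left; apply ln_increasing; lra. Qed.

Lemma rpow_pos (x c : R) : 0 < x -> rpow x c = exp (c * ln x).
Proof. intros Hx. unfold rpow. destruct (Req_EM_T x 0); [lra|]. reflexivity. Qed.

Lemma exp_conv (l u v : R) : 0 <= l <= 1 ->
  exp (l * u + (1 - l) * v) <= l * exp u + (1 - l) * exp v.
Proof.
  intros Hl. set (m := l * u + (1 - l) * v).
  assert (Hu : exp m * (1 + (u - m)) <= exp u).
  { replace (exp u) with (exp m * exp (u - m)) by (rewrite <- exp_plus; f_equal; ring).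
    apply Rmult_le_compat_l; [left; apply exp_pos|apply exp_ineq1_le]. }
  assert (Hv : exp m * (1 + (v - m)) <= exp v).
  { replace (exp v) with (exp m * exp (v - m)) by (rewrite <- exp_plus; f_equal; ring).
    apply Rmult_le_compat_l; [left; apply exp_pos|apply exp_ineq1_le]. }
  assert (E : l * (exp m * (1 + (u - m))) + (1 - l) * (exp m * (1 + (v - m))) = exp m)
    by (unfold m; ring).
  nra.
Qed.

Theorem mainTheorem2 :
  (forall c : R, 1 < c < (1 + sqrt 5) / 2 ->
     exists x y : R, 2 <= x /\ 1 <= y /\ y <= x /\ Phi c y x < 0) /\
  (forall x y : R, 0 <= x -> 1 <= y -> 0 <= Phi ((1 + sqrt 5) / 2) y x).
Proof.
  assert (S5 : sqrt 5 * sqrt 5 = 5) by (apply sqrt_sqrt; lra).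
  assert (S5p : 0 <= sqrt 5) by apply sqrt_pos.
  split.
  - intros c [H1 H2].
    assert (Hcc : c * (c - 1) < 1) by nra.
    set (k := (c + / (c - 1)) / 2).
    assert (Hinv : (c - 1) * / (c - 1) = 1) by (field; lra).
    assert (Hip : 0 < / (c - 1)) by (apply Rinv_0_lt_compat; lra).
    assert (Hic : c < / (c - 1)) by nra.
    set (a1 := k - c). set (a2 := k + 1 - k * c).
    assert (Ha1 : 0 < a1) by (unfold a1, k; lra).
    assert (Ha2 : 0 < a2) by (unfold a2, k; nra).
    assert (Hk : 1 <= k) by (unfold k; lra).
    set (L4 := ln 4).
    assert (HL4 : 0 < L4) by (unfold L4; rewrite <- ln_1; apply ln_increasing; lra).
    set (T := L4 / a1 + L4 / a2 + ln 2 + 1).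
    assert (HT1 : L4 < a1 * T).
    { unfold T. assert (0 < L4 / a2) by (apply Rdiv_lt_0_compat; lra).
      assert (0 < ln 2) by (rewrite <- ln_1; apply ln_increasing; lra).
      assert (a1 * (L4 / a1) = L4) by (field; lra). nra. }
    assert (HT2 : L4 < a2 * T).
    { unfold T. assert (0 < L4 / a1) by (apply Rdiv_lt_0_compat; lra).
      assert (0 < ln 2) by (rewrite <- ln_1; apply ln_increasing; lra).
      assert (a2 * (L4 / a2) = L4) by (field; lra). nra. }
    assert (HT3 : ln 2 <= T).
    { unfold T. assert (0 < L4 / a1) by (apply Rdiv_lt_0_compat; lra).
      assert (0 < L4 / a2) by (apply Rdiv_lt_0_compat; lra). lra. }
    assert (HT0 : 0 <= T) by (assert (0 < ln 2) by (rewrite <- ln_1; apply ln_increasing; lra); lra).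
    exists (exp (k * T)), (exp T).
    assert (Ey : 2 <= exp T) by (rewrite <- (exp_ln 2) by lra; destruct HT3 as [h|h];
      [left; apply exp_increasing; lra| rewrite h; lra]).
    assert (Exy : exp T <= exp (k * T)).
    { destruct (Req_dec T (k*T)) as [h|h]; [rewrite <- h; lra|].
      left; apply exp_increasing; nra. }
    split; [lra|]. split; [lra|]. split; [lra|].
    unfold Phi. rewrite !rpow_pos by (apply exp_pos). rewrite !ln_exp.
    set (y := exp T).
    assert (Ey4 : 4 * exp (c * T) < exp (k * T)).
    { replace (k * T) with (L4 + c * T + (a1 * T - L4)) by (unfold a1; ring).
      rewrite !exp_plus. unfold L4. rewrite exp_ln by lra.
      assert (1 < exp (a1 * T - ln 4)).
      { rewrite <- exp_0. apply exp_increasing. fold L4. lra. }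
      assert (0 < exp (c*T)) by apply exp_pos. nra. }
    assert (Ey5 : 4 * exp (c * (k * T)) < y * exp (k * T)).
    { unfold y. rewrite <- exp_plus.
      replace (T + k * T) with (L4 + c * (k * T) + (a2 * T - L4)) by (unfold a2; ring).
      rewrite !exp_plus. unfold L4. rewrite exp_ln by lra.
      assert (1 < exp (a2 * T - ln 4)).
      { rewrite <- exp_0. apply exp_increasing. fold L4. lra. }
      assert (0 < exp (c*(k*T))) by apply exp_pos. nra. }
    assert (0 < exp (c*T)) by apply exp_pos.
    assert (0 < exp (k*T)) by apply exp_pos.
    assert (A1 : (y + 1) * exp (c * T) <= 2 * y * exp (c * T)).
    { replace (2 * y * exp (c * T)) with ((2 * y) * exp (c * T)) by ring.
      apply Rmult_le_compat_r; [lra|]. fold y in Ey. lra. }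
    assert (A2 : 2 * y * exp (c * T) < y * exp (k * T) / 2) by nra.
    nra.
  - intros x y Hx Hy. set (c := (1 + sqrt 5) / 2).
    assert (Hc2 : c * c = c + 1) by (unfold c; nra).
    assert (Hc1 : 1 < c) by (unfold c; nra).
    assert (Hc3 : c <= 2) by (unfold c; nra).
    assert (Ryc : rpow y c = exp (c * ln y)) by (apply rpow_pos; lra).
    assert (Pyc : 0 < exp (c * ln y)) by apply exp_pos.
    destruct Hx as [Hx|Hx].
    2:{ subst x. unfold Phi. unfold rpow at 2. destruct (Req_EM_T 0 0); [|lra].
        rewrite Ryc. nra. }
    unfold Phi. rewrite Ryc, (rpow_pos x c Hx).
    set (Lc := ln c). set (Lx := ln x). set (Ly := ln y). set (Ly1 := ln (y + 1)).
    set (u := Lc + c * Lx - Ly1). set (v := 2 * Lc + c * Ly).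
    assert (Hl : 0 <= / c <= 1).
    { split; [left; apply Rinv_0_lt_compat; lra|].
      rewrite <- Rinv_1. apply Rinv_le_contravar; lra. }
    pose proof (exp_conv (/ c) u v Hl) as HC.
    assert (Eu : exp u = c * exp (c * Lx) / (y + 1)).
    { unfold u. unfold Rminus. rewrite !exp_plus, exp_Ropp. unfold Lc, Ly1.
      rewrite !exp_ln by lra. field. lra. }
    assert (Ev : exp v = c * c * exp (c * Ly)).
    { unfold v. replace (2 * Lc) with (Lc + Lc) by ring. rewrite !exp_plus.
      unfold Lc. rewrite exp_ln by lra. ring. }
    assert (Hm : Lx <= / c * u + (1 - / c) * v).
    { assert (HLc : 0 <= Lc) by (unfold Lc; rewrite <- ln_1; apply lnle; lra).
      assert (H2 : ln 2 <= 2 * Lc).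
      { unfold Lc. replace (2 * ln c) with (ln (c * c)) by (rewrite ln_mult; lra).
        apply lnle; lra. }
      assert (H3 : Ly1 <= ln 2 + Ly).
      { unfold Ly1, Ly. rewrite <- ln_mult by lra. apply lnle; lra. }
      assert (E : c * c * (/ c * u + (1 - / c) * v) = c * u + v).
      { transitivity (c * u + (c * c - c) * v); [field; lra|].
        rewrite Hc2. ring. }
      apply Rmult_le_reg_l with (c * c); [nra|]. rewrite E.
      unfold u, v.
      assert (c * Ly1 <= c * ln 2 + c * Ly) by nra.
      assert (c * ln 2 <= c * (2 * Lc)) by nra.
      assert (0 <= (2 - c) * Lc) by nra.
      nra. }
    assert (Hxm : x <= exp (/ c * u + (1 - / c) * v)).
    { rewrite <- (exp_ln x) by lra. fold Lx.
      destruct Hm as [h|h]; [left; apply exp_increasing; lra| rewrite h; lra]. }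
    rewrite Eu, Ev in HC.
    assert (E1 : / c * (c * exp (c * Lx) / (y + 1)) = exp (c * Lx) / (y + 1)) by (field; lra).
    assert (E2 : (1 - / c) * (c * c * exp (c * Ly)) = exp (c * Ly)).
    { transitivity ((c * c - c) * exp (c * Ly)); [field; lra|].
      rewrite Hc2. ring. }
    rewrite E1, E2 in HC.
    assert (Hf : (y + 1) * (exp (c * Lx) / (y + 1)) = exp (c * Lx)) by (field; lra).
    nra.
Qed.
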